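(* Let $(S_n)_{n\ge0}$ be defined by $S_0=3$, $S_1=1$, $S_2=3$ and $S_{n+1}=S_n+S_{n-1}+S_{n-2}$ for $n\ge 2$. Let $\alpha,\beta,\gamma$ be the roots of $x^3-x^2-x-1=0$ and $C_n=\alpha^n\beta^n+\alpha^n\gamma^n+\beta^n\gamma^n$ for $n\ge0$. Then for all $n\ge 2$, $$S_nS_{n-1}=S_{2n-1}+C_{n-1}-C_{n-2}.$$
   Context: $S_n$ is the generalized Lucas (generalized Tribonacci) sequence. *)

(* Defs.v *)
From HB Require Import structures.
From mathcomp Require Import all_boot all_order all_algebra.
Set Implicit Arguments. Unset Strict Implicit. Unset Printing Implicit Defensive.
Import Order.TTheory GRing.Theory Num.Theory.
Local Open Scope ring_scope.

Fixpoint S_seq (n : nat) : nat :=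
  match n with
  | 0 => 3
  | n1.+1 =>
    match n1 with
    | 0 => 1
    | n2.+1 =>
      match n2 with
      | 0 => 3
      | n3.+1 => (S_seq n1 + S_seq n2 + S_seq n3)%N
      end
    end
  end.

Definition C_seq (R : comNzRingType) (a b c : R) (n : nat) : R :=
  a ^+ n * b ^+ n + a ^+ n * c ^+ n + b ^+ n * c ^+ n.

(* Main.v *)
Require Import Defs.
From HB Require Import structures.
From mathcomp Require Import all_boot all_order all_algebra.
From mathcomp Require Import ring.
Import Order.TTheory GRing.Theory Num.Theory.
Local Open Scope ring_scope.

Lemma cubic_id (R : comNzRingType) (x a b c : R) :
  x ^+ 3 = (a + b + c) * x ^+ 2 - (a * b + b * c + c * a) * x + a * b * c
           + (x - a) * (x - b) * (x - c).
Proof. ring. Qed.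

Theorem mainTheorem4 (R : numClosedFieldType) (a b c : R)
  (habc : 'X^3 - 'X^2 - 'X - 1 = ('X - a%:P) * ('X - b%:P) * ('X - c%:P))
  (n : nat) (hn : (2 <= n)%N) :
  ((S_seq n * S_seq n.-1)%N)%:R
    = (S_seq (2 * n - 1))%:R + C_seq a b c (n - 1) - C_seq a b c (n - 2).
Proof.
have E : ('X - a%:P) * ('X - b%:P) * ('X - c%:P) =
  'X^3 - ((a+b+c)%:P) * 'X^2 + ((a*b+b*c+c*a)%:P) * 'X - (a*b*c)%:P :> {poly R}.
  rewrite !polyCD !polyCM. ring.
rewrite E in habc.
have h2 := congr1 (fun p : {poly R} => p`_2) habc.
have h1 := congr1 (fun p : {poly R} => p`_1) habc.
have h0 := congr1 (fun p : {poly R} => p`_0) habc.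
move: h2 h1 h0 => /=.
rewrite !(coefB, coefD, coefCM, coefXn, coefX, coefC, coef1) /=.
move=> h2 h1 h0.
have e1 : a + b + c = 1.
  transitivity (- (0 - (a + b + c) * 1 + (a * b + b * c + c * a) * 0 - 0)); first ring.
  by rewrite -h2; ring.
have e2 : a * b + b * c + c * a = -1.
  transitivity (0 - (a + b + c) * 0 + (a * b + b * c + c * a) * 1 - 0); first ring.
  by rewrite -h1; ring.
have e3 : a * b * c = 1.
  transitivity (- (0 - (a + b + c) * 0 + (a * b + b * c + c * a) * 0 - a * b * c)); first ring.
  by rewrite -h0; ring.
have cub : forall x, x = a \/ x = b \/ x = c -> x ^+ 3 = x ^+ 2 + x + 1.
  move=> x hx; rewrite (@cubic_id _ x a b c) e1 e2 e3.
  have -> : (x - a) * (x - b) * (x - c) = 0.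
    by case: hx => [->|[->|->]]; rewrite ?subrr ?mulr0 ?mul0r.
  ring.
have Sn : forall k, (S_seq k)%:R = a ^+ k + b ^+ k + c ^+ k :> R.
  have key : forall k, (S_seq k)%:R = a ^+ k + b ^+ k + c ^+ k :> R /\
     (S_seq k.+1)%:R = a ^+ k.+1 + b ^+ k.+1 + c ^+ k.+1 :> R /\
     (S_seq k.+2)%:R = a ^+ k.+2 + b ^+ k.+2 + c ^+ k.+2 :> R.
    elim=> [|k [IH0 [IH1 IH2]]].
      split; first by rewrite /= !expr0; ring.
      split; first by rewrite /= !expr1 e1.
      rewrite /=.
      have -> : a ^+ 2 + b ^+ 2 + c ^+ 2 = (a+b+c)^+2 - 2 * (a * b + b * c + c * a) by ring.
      rewrite e1 e2; ring.
    split; first by [].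
    split; first by [].
    have -> : S_seq k.+3 = (S_seq k.+2 + S_seq k.+1 + S_seq k)%N by [].
    rewrite !natrD IH0 IH1 IH2.
    have ex : forall x, x = a \/ x = b \/ x = c -> x ^+ k.+3 = x ^+ k.+2 + x ^+ k.+1 + x ^+ k.
      move=> x hx; rewrite -addn3 exprD (cub x hx) !exprS; ring.
    rewrite (ex a) ?(ex b) ?(ex c); [ring| tauto..].
  by move=> k; case: (key k).
case: n hn => [|[|m]] // _.
rewrite natrM !Sn -pred_Sn.
have -> : (2 * m.+2 - 1 = m.+1 + m.+2)%N by rewrite mulSn mul1n addSn addnS subn1.
have -> : (m.+2 - 1 = m.+1)%N by rewrite subn1.
have -> : (m.+2 - 2 = m)%N by rewrite subn2.
rewrite /C_seq !exprD.
set x := a ^+ m; set y := b ^+ m; set z := c ^+ m.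
rewrite !exprS -/x -/y -/z.
have D : forall L Rr : R, L - Rr = 0 -> L = Rr by move=> L Rr /eqP; rewrite subr_eq0 => /eqP.
apply: D.
transitivity ((x*y + x*z + y*z) * (1 - a*b*c) + (a + b + c - 1) * (a * b * (x * y) + a * c * (x * z) + b * c * (y * z))).
  ring.
rewrite e1 e3; ring.
Qed.
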